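(* Let $k\ge 0$ and $\tau\ge 1$ be integers and $0<\kappa\le 1$. Then there exists an integer $K$ such that for every blockade $\mathcal{B}=(B_1,\ldots,B_K)$ of length $K$ and width $W$ in a graph, there is an equicardinal minor $\mathcal{B}'$ of $\mathcal{B}$ of length $k$ and width at least $\kappa^{2^K\tau^\tau}W$ such that $\mathcal{B}'$ is $\tau$-support-uniform and $(\kappa,\tau)$-support-invariant.
   Context: A blockade in a graph $G$ is a sequence $\mathcal{B}=(B_i:i\in I)$ of pairwise disjoint nonempty subsets of $V(G)$ (blocks), $I$ a finite set of integers; its length is $|I|$, its width is $\min_i|B_i|$; it is equicardinal if all blocks have the same cardinality. A sub-blockade is $(B_i:i\in I')$ for $I'\subseteq I$; a contraction is $(B_i':i\in I)$ with $\emptyset\ne B_i'\subseteq B_i$; a minor is a contraction of a sub-blockade. An induced subgraph $H$ of $G$ is $\mathcal{B}$-rainbow if each vertex of $H$ lies in some block and no two lie in the same block; its support is the set of $i\in I$ with $V(H)\cap B_i\neq\emptyset$. The $\mathcal{B}$-ordering of a $\mathcal{B}$-rainbow $H$ is the linear order on $V(H)$ with $u<v$ if $u\in B_i$, $v\in B_j$, $i<j$. An ordered graph is a graph with a linear order of its vertex set; a $\mathcal{B}$-rainbow $H$ is a copy of an ordered graph $J$ if $H$ with its $\mathcal{B}$-ordering is isomorphic to $J$ as ordered graphs. The trace of $J$ relative to $\mathcal{B}$ is the set of supports of all $\mathcal{B}$-rainbow copies of $J$. $\mathcal{B}$ is $\tau$-support-uniform if for every ordered tree $J$ with $|J|\le\tau$,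 the trace of $J$ relative to $\mathcal{B}$ is either empty or consists of all subsets of $I$ of cardinality $|J|$. $\mathcal{B}$ is $(\kappa,\tau)$-support-invariant if for every contraction $\mathcal{B}'$ of $\mathcal{B}$ of width at least $\kappa$ times the width of $\mathcal{B}$, and every ordered tree $J$ with $|J|\le\tau$, the trace of $J$ relative to $\mathcal{B}$ equals the trace of $J$ relative to $\mathcal{B}'$. *)

(* Defs.v *)
From mathcomp Require Import all_boot all_order all_algebra.
Set Implicit Arguments. Unset Strict Implicit. Unset Printing Implicit Defensive.
Import Order.TTheory GRing.Theory Num.Theory.

(* An ordered graph on n vertices is a relation on 'I_n, the linear order
   being the natural order of 'I_n.  An ordered tree: a (simple) tree. *)
Definition ordered_tree (n : nat) (J : rel 'I_n) : Prop :=
  [/\ (0 < n)%N, symmetric J, irreflexive J,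
      (forall x y : 'I_n, connect J x y) &
      (forall (x : 'I_n) (p : seq 'I_n),
          uniq (x :: p) -> path J x p -> (2 <= size p)%N -> ~~ J (last x p) x)].

(* A blockade: index set I (a duplicate-free list of integers >= 0, viewed
   as a finite set) and blocks B i, for i in I. *)
Definition is_blockade (T : finType) (I : seq nat) (B : nat -> {set T}) : Prop :=
  [/\ uniq I,
      (forall i, i \in I -> B i != set0) &
      (forall i j, i \in I -> j \in I -> i != j -> [disjoint B i & B j])].

(* width = min_{i in I} |B i| (value for empty I is irrelevant) *)
Definition width (T : finType) (I : seq nat) (B : nat -> {set T}) : nat :=
  foldr (fun i m => minn #|B i| m) #|B (head 0%N I)| I.

Definition contraction (T : finType) (I : seq nat) (B B' : nat -> {set T}) : Prop :=
  forall i, i \in I -> B' i \subset B i /\ B' i != set0.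

(* S (a finite set of integers, given as a list up to =i) is in the trace
   of the ordered graph J relative to the blockade (I, B): there is a
   B-rainbow induced subgraph with vertices f 0 < ... < f (n-1) (in the
   B-ordering), f i lying in block g i, isomorphic to J as ordered graphs,
   with support S. *)
Definition in_trace (T : finType) (e : rel T) (I : seq nat) (B : nat -> {set T})
    (n : nat) (J : rel 'I_n) (S : seq nat) : Prop :=
  exists (f : 'I_n -> T) (g : 'I_n -> nat),
    [/\ (forall i j : 'I_n, (i < j)%N -> (g i < g j)%N),
        (forall i, g i \in I /\ f i \in B (g i)),
        (forall i j, e (f i) (f j) = J i j) &
        [seq g i | i <- enum 'I_n] =i S].

Definition support_uniform (T : finType) (e : rel T) (I : seq nat)
    (B : nat -> {set T}) (tau : nat) : Prop :=
  forall n (J : rel 'I_n), ordered_tree J -> (n <= tau)%N ->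
    (forall S, ~ in_trace e I B J S) \/
    (forall S, in_trace e I B J S <-> ({subset S <= I} /\ size (undup S) = n)).

Definition support_invariant (R : realFieldType) (T : finType) (e : rel T)
    (kappa : R) (tau : nat) (I : seq nat) (B : nat -> {set T}) : Prop :=
  forall B' : nat -> {set T}, contraction I B B' ->
    (forall i, i \in I -> (kappa * (width I B)%:R <= (#|B' i|)%:R)%R) ->
    forall n (J : rel 'I_n), ordered_tree J -> (n <= tau)%N ->
      forall S, in_trace e I B J S <-> in_trace e I B' J S.

(* Main.v *)
Require Import Defs.
From mathcomp Require Import all_boot all_order all_algebra.
From Stdlib Require Import Classical.
From mathcomp Require Import zify ring lra.
Import Order.TTheory GRing.Theory Num.Theory.
Set Implicit Arguments. Unset Strict Implicit.


Definition hc (c : bool) (P : seq nat -> Prop) (S : seq nat) : Prop :=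
  if c then P S else ~ P S.
Definition homog (r : nat) (P : seq nat -> Prop) (Y : seq nat) : Prop :=
  exists c : bool, forall S, {subset S <= Y} -> size (undup S) = r -> hc c P S.
Definition inveq (P : seq nat -> Prop) : Prop :=
  forall S S', S =i S' -> P S -> P S'.

Lemma hc_inv c P S S' : inveq P -> S =i S' -> hc c P S -> hc c P S'.
Proof.
move=> HP E; case: c => /=; first exact: HP.
move=> nP PS'; apply: nP; apply: HP PS' => x; by rewrite E.
Qed.

Lemma homog_sub r P Y Y' : {subset Y' <= Y} -> homog r P Y -> homog r P Y'.
Proof. move=> sub [c Hc]; exists c => S SY; apply: Hc => x /SY; exact: sub. Qed.

Definition ramsey_prop r m N := forall X : seq nat, uniq X -> (N <= size X)%N ->
  forall P, inveq P -> exists Y, [/\ uniq Y, {subset Y <= X}, size Y = m & homog r P Y].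

Lemma take_facts (X : seq nat) m : uniq X -> (m <= size X)%N ->
  [/\ uniq (take m X), {subset take m X <= X} & size (take m X) = m].
Proof.
move=> uX le; split; [exact: take_uniq | move=> x; exact: mem_take | exact: size_takel].
Qed.

Lemma ramsey0 m : ramsey_prop 0 m m.
Proof.
move=> X uX le P HP; have [u1 s1 z1] := take_facts uX le.
exists (take m X); split => //.
have [H|H] := classic (P [::]).
- exists true => S _ /size0nil uS /=; apply: HP H => x.
  by rewrite -[x \in S]mem_undup uS.
- exists false => S _ /size0nil uS /= PS; apply: H; apply: HP PS => x.
  by rewrite -[x \in S]mem_undup uS.
Qed.

Fixpoint chain_ok r (P : seq nat -> Prop) (ch : seq (nat * bool)) : Prop :=
  if ch is (x, c) :: ch' then
    (forall S, {subset S <= map fst ch'} -> size (undup S) = r -> hc c P (x :: S))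
    /\ chain_ok r P ch'
  else True.

Lemma chain_ex r (IHr : forall m, exists N, ramsey_prop r m N) L :
  exists M, forall X : seq nat, uniq X -> (M <= size X)%N -> forall P, inveq P ->
    exists ch, [/\ size ch = L, uniq (map fst ch), {subset map fst ch <= X} & chain_ok r P ch].
Proof.
elim: L => [|L [ML IHL]].
  by exists 0%N => X _ _ P _; exists [::].
have [N HN] := IHr ML.
exists N.+1 => [[|x X0]] //= uX le P HP.
move: uX => /andP [xX0 uX0].
have HP' : inveq (fun S => P (x :: S)).
  move=> S S' E; apply: HP => y; by rewrite !in_cons E.
have [Y [uY sY zY [c Hc]]] := HN X0 uX0 le _ HP'.
have [ch [z1 u1 s1 ok1]] := IHL Y uY (eq_leq (esym zY)) P HP.
exists ((x, c) :: ch); split => /=; first by rewrite z1.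
- rewrite u1 andbT; apply/negP => /s1 /sY; by rewrite (negbTE xX0).
- move=> y; rewrite in_cons => /orP [/eqP->|/s1 /sY yX0]; first exact: mem_head.
  by rewrite in_cons yX0 orbT.
- split => // S SS zS; apply: Hc => // y /SS; exact: s1.
Qed.

Lemma chain_homog r P c (ch : seq (nat * bool)) : inveq P -> chain_ok r P ch ->
  forall S, {subset S <= [seq p.1 | p <- ch & p.2 == c]} -> size (undup S) = r.+1 ->
  hc c P S.
Proof.
move=> HP; elim: ch => [|[x c'] ch IH] /=.
  move=> _ [|y S] sub; first by [].
  by have := sub y (mem_head _ _).
move=> [H1 H2] S sub zS.
have [xS|xS] := boolP (x \in S); last first.
  apply: IH => // y yS; have := sub y yS.
  case: ifP => _ //; rewrite in_cons => /orP [/eqP E|//].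
  by move: xS; rewrite /= in E; rewrite -E yS.
case: (boolP (c' == c)) => cc; last first.
  apply: IH => // y yS; have := sub y yS; by rewrite (negbTE cc).
move/eqP: cc => cc; subst c'.
set S' := [seq y <- S | y != x].
have eqS : x :: S' =i S.
  move=> y; rewrite in_cons mem_filter.
  by case: (eqVneq y x) => [->|]; rewrite ?xS.
apply: hc_inv HP eqS _; apply: H1.
- move=> y; rewrite mem_filter => /andP [yx yS]; have := sub y yS.
  rewrite eqxx in_cons (negbTE yx) /=.
  apply: (mem_subseq (map_subseq fst (filter_subseq _ ch))).
- have := zS; rewrite /S' -filter_undup.
  rewrite size_filter.
  have : count (pred1 x) (undup S) = 1%N.
    by rewrite count_uniq_mem ?undup_uniq // mem_undup xS.
  move=> c1 z2; have := count_predC (pred1 x) (undup S).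
  rewrite c1 z2 => e.
  have -> : count (fun y => y != x) (undup S) = count (predC (pred1 x)) (undup S) by [].
  by move: e; rewrite add1n => -[].
Qed.

Lemma ramsey r m : exists N, ramsey_prop r m N.
Proof.
elim: r m => [|r IHr] m; first by exists m; exact: ramsey0.
have [M HM] := chain_ex IHr (m + m).
exists M => X uX le P HP.
have [ch [z1 u1 s1 ok1]] := HM X uX le P HP.
have cnt : (m <= count (fun p : nat * bool => p.2 == true) ch)%N \/
           (m <= count (fun p : nat * bool => p.2 == false) ch)%N.
  have := count_predC (fun p : nat * bool => p.2 == true) ch.
  have -> : count (predC (fun p : nat * bool => p.2 == true)) ch =
            count (fun p : nat * bool => p.2 == false) ch.
    by apply: eq_count => -[? []].
  rewrite z1 => e; lia.
have gen c : (m <= count (fun p : nat * bool => p.2 == c) ch)%N ->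
    exists Y, [/\ uniq Y, {subset Y <= X}, size Y = m & homog r.+1 P Y].
  move=> cm; set Y0 := [seq p.1 | p <- ch & p.2 == c].
  have uY0 : uniq Y0.
    rewrite /Y0; apply: subseq_uniq u1; apply: map_subseq; exact: filter_subseq.
  have zY0 : size Y0 = count (fun p : nat * bool => p.2 == c) ch by rewrite size_map size_filter.
  have [u2 s2 z2] := take_facts uY0 (leq_trans cm (eq_leq (esym zY0))).
  exists (take m Y0); split => //.
  - move=> y /s2; rewrite /Y0 => /mapP [p]; rewrite mem_filter => /andP [_ pch] ->.
    apply: s1; exact: map_f.
  - exists c => S SY zS; apply: (chain_homog HP ok1 _ zS) => y yS.
    by apply: s2; apply: SY.
by case: cnt; apply: gen.
Qed.

Lemma ramsey_many (A : eqType) (r : A -> nat) (l : seq A) m : exists N,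
  forall X : seq nat, uniq X -> (N <= size X)%N ->
  forall P : A -> seq nat -> Prop, (forall a, inveq (P a)) ->
  exists Y, [/\ uniq Y, {subset Y <= X}, size Y = m &
             forall a, a \in l -> homog (r a) (P a) Y].
Proof.
elim: l => [|a l [N1 IH]].
  exists m => X uX le P _; have [u1 s1 z1] := take_facts uX le.
  by exists (take m X); split.
have [N HN] := ramsey (r a) N1.
exists N => X uX le P HP.
have [Y1 [u1 s1 z1 h1]] := HN X uX le (P a) (HP a).
have [Y [u2 s2 z2 h2]] := IH Y1 u1 (eq_leq (esym z1)) P HP.
exists Y; split => //; first by move=> y /s2 /s1.
move=> b; rewrite in_cons => /orP [/eqP->|bl]; last exact: h2.
apply: homog_sub h1; exact: s2.
Qed.


Section Tr.
Variables (T : finType) (e : rel T).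

Lemma trace_mono I B B' n (J : rel 'I_n) S : contraction I B B' ->
  in_trace e I B' J S -> in_trace e I B J S.
Proof.
move=> C [f [g [h1 h2 h3 h4]]]; exists f, g; split => // i.
have [gi fi] := h2 i; split => //; have [sub _] := C _ gi; exact: (subsetP sub).
Qed.

Lemma trace_ext I B1 B2 n (J : rel 'I_n) S : (forall i, i \in I -> B1 i = B2 i) ->
  in_trace e I B1 J S -> in_trace e I B2 J S.
Proof.
move=> E [f [g [h1 h2 h3 h4]]]; exists f, g; split => // i.
have [gi fi] := h2 i; by rewrite -E.
Qed.

Lemma trace_J I B n (J1 J2 : rel 'I_n) S : (forall i j, J1 i j = J2 i j) ->
  in_trace e I B J1 S -> in_trace e I B J2 S.
Proof.
move=> E [f [g [h1 h2 h3 h4]]]; exists f, g; split => // i j; by rewrite -E.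
Qed.

Lemma trace_S I B n (J : rel 'I_n) S1 S2 : S1 =i S2 ->
  in_trace e I B J S1 -> in_trace e I B J S2.
Proof.
move=> E [f [g [h1 h2 h3 h4]]]; exists f, g; split => // x; by rewrite h4 E.
Qed.

Lemma trace_sub I1 I2 B n (J : rel 'I_n) S : {subset I1 <= I2} ->
  in_trace e I1 B J S <-> in_trace e I2 B J S /\ {subset S <= I1}.
Proof.
move=> sub; split.
  move=> [f [g [h1 h2 h3 h4]]]; split.
    exists f, g; split => // i; have [gi fi] := h2 i; split => //; exact: sub.
  move=> x; rewrite -h4 => /mapP [i _ ->]; exact: (h2 i).1.
move=> [[f [g [h1 h2 h3 h4]]] sS]; exists f, g; split => // i.
have [gi fi] := h2 i; split => //; apply: sS; rewrite -h4; apply: map_f.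
exact: mem_enum.
Qed.

Lemma trace_size I B n (J : rel 'I_n) S : in_trace e I B J S ->
  {subset S <= I} /\ size (undup S) = n.
Proof.
move=> [f [g [h1 h2 h3 h4]]]; split.
  move=> x; rewrite -h4 => /mapP [i _ ->]; exact: (h2 i).1.
have inj : injective g.
  move=> i j E; case: (ltngtP i j) => [lt|lt|eq]; last exact: val_inj.
    by have := h1 _ _ lt; rewrite E ltnn.
  by have := h1 _ _ lt; rewrite E ltnn.
have u : uniq [seq g i | i <- enum 'I_n] by rewrite map_inj_uniq ?enum_uniq.
have eqs : undup S =i [seq g i | i <- enum 'I_n] by move=> x; rewrite mem_undup h4.
have := uniq_perm (undup_uniq S) u eqs.
by move/perm_size; rewrite size_map size_enum_ord.
Qed.

Lemma trace_nil B n (J : rel 'I_n) S : (0 < n)%N -> ~ in_trace e [::] B J S.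
Proof. move=> n0 [f [g [_ h2 _ _]]]; by have [] := h2 (Ordinal n0). Qed.

End Tr.


Lemma width_le (T : finType) I (B : nat -> {set T}) i : i \in I -> (width I B <= #|B i|)%N.
Proof.
rewrite /width; elim: I (#|B (head 0%N I)|) => [|a I IH] x0 //=.
rewrite in_cons => /orP [/eqP->|iI]; first exact: geq_minl.
apply: leq_trans (geq_minr _ _) _; exact: IH.
Qed.

Lemma width_att (T : finType) I (B : nat -> {set T}) : I != [::] ->
  exists2 i, i \in I & width I B = #|B i|.
Proof.
case: I => [//|a I] _.
have gen : forall x0, x0 = #|B a| -> exists2 i, i \in a :: I &
    foldr (fun i m => minn #|B i| m) x0 (a :: I) = #|B i|.
  move=> x0 ->; elim: I => [|b I [i iI IH]] /=.
    by exists a; rewrite ?mem_head ?minnn.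
  move: IH => /= IH.
  case: (leqP #|B b| (minn #|B a| (foldr (fun i m => minn #|B i| m) #|B a| I))) => h.
  - exists b; first by rewrite !in_cons eqxx orbT.
    rewrite minnCA; exact/minn_idPl.
  - exists i; first by move: iI; rewrite !in_cons => /orP [->|->]; rewrite ?orbT.
    rewrite minnCA IH; apply/minn_idPr; rewrite IH in h; exact: ltnW.
exact: gen.
Qed.

Section KE.
Local Open Scope ring_scope.
Lemma kexp_mono (R : realFieldType) (k : R) m n : 0 <= k -> k <= 1 -> (m <= n)%N ->
  k ^+ n <= k ^+ m.
Proof.
move=> k0 k1 mn; rewrite -(subnKC mn) exprD.
apply: ler_piMr; first exact: exprn_ge0.
exact: exprn_ile1.
Qed.

End KE.


Section Enc.
Variables (T : finType) (e : rel T) (t L : nat).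

Definition UU := ('I_t.+2 * {ffun 'I_t.+1 * 'I_t.+1 -> bool} * {ffun 'I_t.+1 -> 'I_L.+1})%type.

Definition decJ n (Jf : {ffun 'I_t.+1 * 'I_t.+1 -> bool}) : rel 'I_n :=
  fun i j => Jf (@inord t i, @inord t j).
Definition encJ n (J : rel 'I_n) : {ffun 'I_t.+1 * 'I_t.+1 -> bool} :=
  [ffun p => [exists i : 'I_n, exists j : 'I_n,
     [&& val i == val p.1, val j == val p.2 & J i j]]].

Lemma decJK n (J : rel 'I_n) : (n <= t.+1)%N -> forall i j, decJ (encJ J) i j = J i j.
Proof.
move=> nt i j; rewrite /decJ ffunE /=.
have hi : (i < t.+1)%N by apply: leq_trans (ltn_ord i) nt.
have hj : (j < t.+1)%N by apply: leq_trans (ltn_ord j) nt.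
rewrite !inordK //.
apply/existsP/idP.
  move=> [i' /existsP [j' /and3P [/eqP e1 /eqP e2 Jij]]].
  have -> : i = i' by apply: val_inj.
  by have -> : j = j' by apply: val_inj.
move=> Jij; exists i; apply/existsP; exists j; by rewrite !eqxx Jij.
Qed.

Definition decS n (gf : {ffun 'I_t.+1 -> 'I_L.+1}) : seq nat :=
  [seq val (gf (@inord t i)) | i <- iota 0 n].
Definition encS n (g : 'I_n -> nat) : {ffun 'I_t.+1 -> 'I_L.+1} :=
  [ffun i : 'I_t.+1 => @inord L (nth 0%N [seq g j | j <- enum 'I_n] i)].

Lemma decSK n (g : 'I_n -> nat) : (n <= t.+1)%N -> (forall j, g j <= L)%N ->
  decS n (encS g) = [seq g j | j <- enum 'I_n].
Proof.
move=> nt gL; set s := [seq g j | j <- enum 'I_n].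
have zs : size s = n by rewrite size_map size_enum_ord.
rewrite /decS -[RHS](mkseq_nth 0%N s) zs /mkseq; apply/eq_in_map => i.
rewrite mem_iota add0n => /andP [_ lin].
rewrite ffunE inordK; last by apply: leq_trans lin nt.
rewrite /= inordK //; rewrite ltnS.
have : nth 0%N s i \in s by rewrite mem_nth ?zs.
by move/mapP => [j _ ->].
Qed.

Definition inU (B : nat -> {set T}) (u : UU) : Prop :=
  in_trace e (iota 1 L) B (@decJ (val u.1.1) u.1.2) (decS (val u.1.1) u.2).

Lemma encode B n (J : rel 'I_n) S : (n <= t.+1)%N -> in_trace e (iota 1 L) B J S ->
  exists u, forall B', in_trace e (iota 1 L) B' J S <-> inU B' u.
Proof.
move=> nt tr; have [f [g [h1 h2 h3 h4]]] := tr.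
have gL : forall j, (g j <= L)%N.
  move=> j; have := (h2 j).1; rewrite mem_iota; lia.
exists (@inord t.+1 n, encJ J, encS g) => B'.
rewrite /inU /= inordK // decSK //.
have E1 : forall i j, J i j = decJ (encJ J) i j by move=> i j; rewrite decJK.
have E2 : forall i j, decJ (encJ J) i j = J i j by move=> i j; rewrite decJK.
split => H.
  apply: (trace_J E1).
  apply: trace_S H => x; by rewrite h4.
apply: (trace_S (S1 := [seq g j | j <- enum 'I_n])); first by move=> x; rewrite h4.
exact: (trace_J E2) H.
Qed.

End Enc.


Lemma contr_trans (T : finType) I (B1 B2 B3 : nat -> {set T}) :
  contraction I B1 B2 -> contraction I B2 B3 -> contraction I B1 B3.
Proof.
move=> C1 C2 i iI; have [s1 _] := C1 i iI; have [s2 n2] := C2 i iI.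
split => //; exact: subset_trans s2 s1.
Qed.

Section Stab.
Variables (R : realFieldType) (T : finType) (e : rel T) (t L : nat) (k : R).
Hypotheses (k0 : (0 < k)%R) (k1 : (k <= 1)%R) (L1 : (1 <= L)%N).
Local Open Scope ring_scope.

Definition invB (Bs : nat -> {set T}) : Prop :=
  forall B'', contraction (iota 1 L) Bs B'' ->
  (forall i, i \in iota 1 L -> k * (width (iota 1 L) Bs)%:R <= (#|B'' i|)%:R) ->
  forall n (J : rel 'I_n), (n <= t.+1)%N -> forall S,
    in_trace e (iota 1 L) Bs J S -> in_trace e (iota 1 L) B'' J S.

Lemma Ine : iota 1 L != [::].
Proof. by case: L L1. Qed.

Lemma stab s : forall (A : {set UU t L}) (B : nat -> {set T}), (#|A| <= s)%N ->
  (forall u, inU e B u -> u \in A) -> (forall i, i \in iota 1 L -> B i != set0) ->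
  exists Bs, [/\ contraction (iota 1 L) B Bs,
     k ^+ s * (width (iota 1 L) B)%:R <= (width (iota 1 L) Bs)%:R & invB Bs].
Proof.
elim: s => [|s IH] A B cA sA nB.
all: have [iB|niB] := classic (invB B).
1,3: exists B; split => //; [by move=> i iI; rewrite subxx nB |
       apply: ler_piMl; [exact: ler0n | apply: exprn_ile1 => //; exact: ltW]].
all: have [B'' [C [Hw [n [J [nt [S [tB ntB]]]]]]]] :
  exists B'', contraction (iota 1 L) B B'' /\
    (forall i, i \in iota 1 L -> k * (width (iota 1 L) B)%:R <= (#|B'' i|)%:R) /\
    exists n (J : rel 'I_n), (n <= t.+1)%N /\ exists S,
      in_trace e (iota 1 L) B J S /\ ~ in_trace e (iota 1 L) B'' J S;
  first (apply: NNPP => H; apply: niB => B'' C Hw n J nt S tB; apply: NNPP => ntB;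
    apply: H; exists B''; split => //; split => //; exists n, J; split => //;
    by exists S).
all: have [u0 Hu0] := encode nt tB.
all: have u0A : u0 \in A by apply: sA; apply/Hu0.
all: have := cardsD1 u0 A; rewrite u0A.
  by move=> E; move: cA; rewrite E.
move=> E.
have cA' : (#|A :\ u0| <= s)%N by move: cA; rewrite E.
have sA' : forall u, inU e B'' u -> u \in A :\ u0.
  move=> u Hu; rewrite in_setD1; apply/andP; split.
    apply/eqP => eu; subst u; apply: ntB; exact/Hu0.
  apply: sA; move: Hu; rewrite /inU; exact: trace_mono.
have nB'' : forall i, i \in iota 1 L -> B'' i != set0 by move=> i /C [].
have [Bs [C' Hw' iBs]] := IH _ _ cA' sA' nB''.
exists Bs; split => //; first exact: contr_trans C C'.
apply: le_trans Hw'; rewrite exprSr -mulrA; apply: ler_wpM2l.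
  apply: exprn_ge0; exact: ltW.
have [i0 i0I ->] := width_att B'' Ine.
exact: Hw.
Qed.
End Stab.

Unset Implicit Arguments. Set Strict Implicit.
Theorem theorem4p3 (R : realFieldType) (k tau : nat) (kappa : R) :
  (1 <= tau)%N -> (0 < kappa)%R -> (kappa <= 1)%R ->
  exists K : nat,
    forall (T : finType) (e : rel T), symmetric e -> irreflexive e ->
    forall (B : nat -> {set T}) (W : nat),
      is_blockade (iota 1 K) B -> W = width (iota 1 K) B ->
      exists (I' : seq nat) (B' : nat -> {set T}),
        uniq I' /\ {subset I' <= iota 1 K} /\ size I' = k /\
        contraction I' B B' /\
        (forall i j, i \in I' -> j \in I' -> #|B' i| = #|B' j|) /\
        (forall i, i \in I' ->
           (kappa ^+ (2 ^ K * tau ^ tau) * W%:R <= (#|B' i|)%:R)%R) /\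
        support_uniform e I' B' tau /\
        support_invariant e kappa tau I' B'.
Proof.
move=> ht k0 k1; case: tau ht => [//|t] _.
pose AA : finType := ('I_t.+2 * {ffun 'I_t.+1 * 'I_t.+1 -> bool})%type.
have [N HN] := ramsey_many (fun a : AA => val a.1) (enum AA) k.
pose L := N.+1.
have L1 : (1 <= L)%N by [].
exists (L + #|{: UU t L}|)%N.
set K := (L + #|{: UU t L}|)%N.
move=> T e _ _ B W [_ nBK _] ->.
have IK : {subset iota 1 L <= iota 1 K}.
  move=> i; rewrite !mem_iota /K; lia.
have nB : forall i, i \in iota 1 L -> B i != set0 by move=> i /IK /nBK.
have cA : (#|[set: UU t L]| <= #|{: UU t L}|)%N by rewrite cardsT.
have [Bs [C Hw iBs]] := stab (e:=e) (t:=t) k0 k1 L1 (A:=setT) cA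
  (fun u _ => in_setT u) nB.
set w := width (iota 1 L) Bs.
pose Be i := [set x in take w (enum (Bs i))].
have wle : forall i, i \in iota 1 L -> (w <= #|Bs i|)%N by move=> i; exact: width_le.
have wpos : (0 < w)%N.
  rewrite /w; have [i0 i0I ->] := width_att Bs (Ine L1).
  rewrite card_gt0; exact: (C i0 i0I).2.
have cBe : forall i, i \in iota 1 L -> #|Be i| = w.
  move=> i iI; rewrite cardsE /=.
  rewrite (card_uniqP _); last by apply: take_uniq; exact: enum_uniq.
  by rewrite size_takel // -cardE wle.
have sBe : forall i, Be i \subset Bs i.
  by move=> i; apply/subsetP => x; rewrite inE => /mem_take; rewrite mem_enum.
have CBe : contraction (iota 1 L) Bs Be.
  move=> i iI; split => //; by rewrite -card_gt0 cBe.
have trBe : forall n (J : rel 'I_n), (n <= t.+1)%N -> forall S,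
    in_trace e (iota 1 L) Bs J S -> in_trace e (iota 1 L) Be J S.
  move=> n J nt S; apply: iBs => // i iI; rewrite cBe //.
  rewrite -[X in (_ <= X)%R]mul1r; apply: ler_wpM2r => //; exact: ler0n.
pose P (a : AA) (S : seq nat) :=
  in_trace e (iota 1 L) Be (@decJ t (val a.1) a.2) S.
have HP : forall a, inveq (P a) by move=> a S S' E; apply: trace_S.
have zL : (N <= size (iota 1 L))%N by rewrite size_iota.
have [Y [uY sY zY hY]] := HN (iota 1 L) (iota_uniq 1 L) zL P HP.
exists Y, Be.
split => //; split; first by move=> i /sY /IK.
split => //; split.
  move=> i /sY iI; split; last exact: (CBe i iI).2.
  apply: subset_trans (sBe i) _; exact: (C i iI).1.
split; first by move=> i j /sY iI /sY jI; rewrite !cBe.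
split.
  move=> i /sY iI; rewrite cBe //.
  have cU : (#|{: UU t L}| <= 2 ^ K * t.+1 ^ t.+1)%N.
    have h1 := ltn_expl K (ltnSn 1).
    have h2 : (0 < t.+1 ^ t.+1)%N by rewrite expn_gt0.
    rewrite /K in h1 *; nia.
  apply: le_trans Hw.
  apply: (@le_trans _ _ (kappa ^+ #|{: UU t L}| * (width (iota 1 K) B)%:R)%R).
    apply: ler_wpM2r; first exact: ler0n.
    apply: kexp_mono => //; exact: ltW.
  apply: ler_wpM2l; first by apply: exprn_ge0; exact: ltW.
  rewrite ler_nat.
  have [i0 i0I ->] := width_att B (Ine L1).
  apply: width_le; exact: IK.
have sYL : {subset Y <= iota 1 L} by [].
split.
  move=> n J tJ nt.
  have := hY (inord n, encJ t J) (mem_enum _ _).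
  rewrite /P /= inordK // => -[c Hc].
  have E1 : forall i j, J i j = decJ (encJ t J) i j by move=> i j; rewrite decJK.
  have E2 : forall i j, decJ (encJ t J) i j = J i j by move=> i j; rewrite decJK.
  case: c Hc => /= Hc.
    right => S; split; first exact: trace_size.
    move=> [sub sz]; apply/(trace_sub e Be J S sYL); split => //.
    exact: (trace_J E2) (Hc S sub sz).
  left => S tS; have [sub sz] := trace_size tS.
  apply: (Hc S sub sz); apply: (trace_J E1).
  exact: ((trace_sub e Be J S sYL).1 tS).1.
move=> B'' C'' Hw'' n J tJ nt S.
have n0 : (0 < n)%N by case: tJ.
case: (eqVneq Y [::]) => [Y0|Yne].
  by rewrite Y0; split => H; exfalso; exact: (trace_nil n0 H).
have wY : width Y Be = w.
  have [i iY ->] := width_att Be Yne; exact: cBe (sYL _ iY).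
split; last exact: trace_mono.
move=> H.
pose B3 i := if i \in Y then B'' i else Be i.
have C3 : contraction (iota 1 L) Bs B3.
  move=> i iI; rewrite /B3; case: ifP => iY; last exact: CBe.
  have [s1 n1] := C'' i iY; split => //; apply: subset_trans s1 (sBe i).
have W3 : forall i, i \in iota 1 L -> (kappa * w%:R <= #|B3 i|%:R)%R.
  move=> i iI; rewrite /B3; case: ifP => iY; first by rewrite -wY; exact: Hw''.
  rewrite cBe // -[X in (_ <= X)%R]mul1r; apply: ler_wpM2r => //; exact: ler0n.
have [H1 HS] := (trace_sub e Be J S sYL).1 H.
have H2 := trace_mono CBe H1.
have H3 := iBs B3 C3 W3 n J nt S H2.
have H4 := (trace_sub e B3 J S sYL).2 (conj H3 HS).
apply: trace_ext H4 => i iY; by rewrite /B3 iY.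
Qed.
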